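(* Let $1\le p<2$. There is a constant $C>0$ depending only on $p$ such that for all $n$ and all $a=(a_i)_{i=1}^n$, $b=(b_i)_{i=1}^n$ real sequences, writing $ab=(a_1b_1,\dots,a_nb_n)$, $$s_p(ab)\le C\,s_p(a)\big(\|b\|_\infty+v_p(b)\big).$$
   Context: For a finite real sequence $x=(x_1,\dots,x_n)$, $s_p(x)=\big(\sup_{k\le n}\sup_{0=i_0<\dots<i_k=n}\sum_{j=0}^{k-1}\big|\sum_{\ell=i_j+1}^{i_{j+1}}x_\ell\big|^p\big)^{1/p}$ and $v_p(x)=\big(\sup_{k\le n}\sup_{0=i_0<\dots<i_k=n}\sum_{j=0}^{k-1}|x_{i_{j+1}}-x_{i_j+1}|^p\big)^{1/p}$; $\|b\|_\infty=\max_i|b_i|$. *)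

(* Defs.v *)
From Stdlib Require Import Reals List Lra.
Import ListNotations.
Open Scope R_scope.

(* Real power |t|^p for t >= 0, with the convention 0^p = 0 (p > 0). *)
Definition rpow (t p : R) : R := if Req_EM_T t 0 then 0 else Rpower t p.

(* A finite real sequence x = (x_1,...,x_n) is a function nat -> R
   together with its length n; only the values x 1, ..., x n matter. *)

Definition blocksum (x : nat -> R) (i j : nat) : R :=
  fold_right Rplus 0 (map x (seq (S i) (j - i))).

Fixpoint sublists (l : list nat) : list (list nat) :=
  match l with
  | [] => [[]]
  | a :: t => let r := sublists t in map (cons a) r ++ r
  end.

(* All partitions 0 = i_0 < i_1 < ... < i_k = n (k >= 1), given as the
   lists [i_0; ...; i_k].  For n = 0 there is none. *)
Definition partitions (n : nat) : list (list nat) :=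
  match n with
  | O => []
  | _ => map (fun l => 0%nat :: l ++ [n]) (sublists (seq 1 (n - 1)))
  end.

Fixpoint pairsum (f : nat -> nat -> R) (l : list nat) : R :=
  match l with
  | a :: ((b :: _) as t) => f a b + pairsum f t
  | _ => 0
  end.

(* maximum of a finite list of reals (0 for the empty list; all the values
   considered below are nonnegative) *)
Definition maxlist (l : list R) : R := fold_right Rmax 0 l.

Definition sp_pow (p : R) (n : nat) (x : nat -> R) : R :=
  maxlist (map (pairsum (fun i j => rpow (Rabs (blocksum x i j)) p))
               (partitions n)).

Definition s_p (p : R) (n : nat) (x : nat -> R) : R := rpow (sp_pow p n x) (/ p).

Definition vp_pow (p : R) (n : nat) (x : nat -> R) : R :=
  maxlist (map (pairsum (fun i j => rpow (Rabs (x j - x (S i))) p))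
               (partitions n)).

Definition v_p (p : R) (n : nat) (x : nat -> R) : R := rpow (vp_pow p n x) (/ p).

Definition supnorm (n : nat) (b : nat -> R) : R :=
  maxlist (map (fun i => Rabs (b i)) (seq 1 n)).

(* Main.v *)
Require Import Defs.
From Stdlib Require Import Reals Lra Lia List.
Import ListNotations.
Open Scope R_scope.

Lemma Rpower_pos x y : 0 < Rpower x y.
Proof. unfold Rpower; apply exp_pos. Qed.

Lemma rpow_pos_eq t p : 0 < t -> rpow t p = Rpower t p.
Proof. intros H; unfold rpow; destruct (Req_EM_T t 0); [lra|auto]. Qed.

Lemma rpow_0 p : rpow 0 p = 0.
Proof. unfold rpow; destruct (Req_EM_T 0 0); [auto|lra]. Qed.

Lemma rpow_ge0 t p : 0 <= rpow t p.
Proof. unfold rpow; destruct (Req_EM_T t 0); [lra|]. left; apply Rpower_pos. Qed.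

Lemma Rpower_le_base x y c : 0 <= c -> 0 < x <= y -> Rpower x c <= Rpower y c.
Proof. intros; apply Rle_Rpower_l; auto. Qed.

Lemma rpow_le t u p : 0 < p -> 0 <= t <= u -> rpow t p <= rpow u p.
Proof.
  intros Hp [H1 H2]. destruct (Req_dec t 0) as [->|Ht].
  - rewrite rpow_0; apply rpow_ge0.
  - rewrite !rpow_pos_eq by lra. apply Rle_Rpower_l; lra.
Qed.

Lemma rpow_lt t u p : 0 < p -> 0 <= t < u -> rpow t p < rpow u p.
Proof.
  intros Hp [H1 H2]. destruct (Req_dec t 0) as [->|Ht].
  - rewrite rpow_0, rpow_pos_eq by lra; apply Rpower_pos.
  - rewrite !rpow_pos_eq by lra. apply Rlt_Rpower_l; lra.
Qed.

Lemma rpow_le_inv t u p : 0 < p -> 0 <= t -> 0 <= u -> rpow t p <= rpow u p -> t <= u.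
Proof.
  intros Hp Ht Hu H. destruct (Rle_lt_dec t u); auto.
  assert (rpow u p < rpow t p) by (apply rpow_lt; lra). lra.
Qed.

Lemma rpow_mult x y p : 0 <= x -> 0 <= y -> rpow (x * y) p = rpow x p * rpow y p.
Proof.
  intros Hx Hy. destruct (Req_dec x 0) as [->|Hx'].
  { rewrite Rmult_0_l, !rpow_0; ring. }
  destruct (Req_dec y 0) as [->|Hy'].
  { rewrite Rmult_0_r, !rpow_0; ring. }
  rewrite !rpow_pos_eq by nra. rewrite Rpower_mult_distr by lra. auto.
Qed.

Lemma rpow_rpow x p q : 0 <= x -> rpow (rpow x p) q = rpow x (p * q).
Proof.
  intros Hx. destruct (Req_dec x 0) as [->|Hx'].
  { rewrite !rpow_0; auto. }
  rewrite (rpow_pos_eq x p) by lra. rewrite !rpow_pos_eq by (try apply Rpower_pos; lra).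
  apply Rpower_mult.
Qed.

Lemma rpow_1 x : 0 <= x -> rpow x 1 = x.
Proof.
  intros Hx. destruct (Req_dec x 0) as [->|Hx']. { apply rpow_0. }
  rewrite rpow_pos_eq by lra. apply Rpower_1; lra.
Qed.

Lemma rpow_inv x p : 0 < p -> 0 <= x -> rpow (rpow x p) (/ p) = x.
Proof.
  intros Hp Hx. rewrite rpow_rpow by auto. rewrite Rinv_r by lra. apply rpow_1; auto.
Qed.

Lemma rpow_inv' x p : 0 < p -> 0 <= x -> rpow (rpow x (/ p)) p = x.
Proof.
  intros Hp Hx. rewrite rpow_rpow by auto. rewrite Rinv_l by lra. apply rpow_1; auto.
Qed.

Lemma rpow_ge_self u p : 1 <= p -> 1 <= u -> u <= rpow u p.
Proof.
  intros Hp Hu. rewrite rpow_pos_eq by lra.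
  replace p with (1 + (p - 1)) by ring. rewrite Rpower_plus, Rpower_1 by lra.
  assert (1 <= Rpower u (p - 1)).
  { rewrite <- (Rpower_O u) at 1 by lra. apply Rle_Rpower; lra. }
  nra.
Qed.

Lemma rpow_superadd x y p : 1 <= p -> 0 <= x -> 0 <= y -> rpow x p + rpow y p <= rpow (x + y) p.
Proof.
  intros Hp Hx Hy. destruct (Req_dec x 0) as [->|Hx'].
  { rewrite rpow_0, !Rplus_0_l; lra. }
  destruct (Req_dec y 0) as [->|Hy'].
  { rewrite rpow_0, !Rplus_0_r; lra. }
  rewrite !rpow_pos_eq by lra.
  replace p with (1 + (p - 1)) by ring. rewrite !Rpower_plus, !Rpower_1 by lra.
  assert (Rpower x (p-1) <= Rpower (x+y) (p-1)) by (apply Rle_Rpower_l; lra).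
  assert (Rpower y (p-1) <= Rpower (x+y) (p-1)) by (apply Rle_Rpower_l; lra).
  nra.
Qed.

Lemma rpow_sum2 x y p : 1 <= p -> 0 <= x -> 0 <= y ->
  rpow (x + y) p <= rpow 2 p * (rpow x p + rpow y p).
Proof.
  intros Hp Hx Hy.
  assert (H: rpow (x + y) p <= rpow (2 * Rmax x y) p).
  { apply rpow_le; [lra|]. split; [lra|]. unfold Rmax; destruct (Rle_dec x y); lra. }
  rewrite rpow_mult in H by (unfold Rmax; destruct (Rle_dec x y); lra).
  assert (rpow (Rmax x y) p <= rpow x p + rpow y p).
  { unfold Rmax; destruct (Rle_dec x y); pose proof (rpow_ge0 x p); pose proof (rpow_ge0 y p); lra. }
  assert (0 <= rpow 2 p) by apply rpow_ge0. nra.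
Qed.

Inductive ch : nat -> list nat -> nat -> Prop :=
| ch1 a : ch a [a] a
| chS a b L c : (a < b)%nat -> ch b L c -> ch a (a :: L) c.

Lemma ch_hd a L c : ch a L c -> exists L', L = a :: L'.
Proof. intros H; inversion H; subst; eauto. Qed.

Lemma ch_le a L c : ch a L c -> (a <= c)%nat.
Proof. induction 1; lia. Qed.

Lemma ch_inv c x M d : ch c (x :: M) d ->
  x = c /\ ((M = [] /\ c = d) \/ exists b, (c < b)%nat /\ ch b M d).
Proof. intros H; inversion H; subst; eauto. Qed.

Lemma ch_self c L : ch c L c -> L = [c].
Proof.
  intros H. inversion H; subst; auto. apply ch_le in H1. lia.
Qed.

Lemma pairsum_cons f a x L : pairsum f (a :: x :: L) = f a x + pairsum f (x :: L).
Proof. reflexivity. Qed.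

Lemma ch_app a L b M c : ch a L b -> ch b M c ->
  ch a (L ++ tl M) c /\ forall f, pairsum f (L ++ tl M) = pairsum f L + pairsum f M.
Proof.
  intros H1 H2. induction H1.
  - destruct (ch_hd _ _ _ H2) as [M' ->]. simpl. split; auto. intros; simpl; ring.
  - destruct (IHch H2) as [IH1 IH2]. split.
    + simpl. econstructor; eauto.
    + intros f. destruct (ch_hd _ _ _ H1) as [L' ->]. simpl app.
      rewrite !pairsum_cons. rewrite Rplus_assoc, <- (IH2 f). simpl app. reflexivity.
Qed.

Lemma pairsum_ge0 f L : (forall u v, 0 <= f u v) -> 0 <= pairsum f L.
Proof.
  intros Hf. induction L as [|a L IH]; simpl; [lra|].
  destruct L; [lra|]. specialize (Hf a n). lra.
Qed.

Lemma pairsum_le_ch f g lo P hi : ch lo P hi ->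
  (forall u v, (lo <= u)%nat -> (u < v)%nat -> (v <= hi)%nat -> f u v <= g u v) ->
  pairsum f P <= pairsum g P.
Proof.
  induction 1; intros H'; simpl; [lra|].
  destruct (ch_hd _ _ _ H0) as [L' ->].
  pose proof (ch_le _ _ _ H0).
  assert (f a b <= g a b) by (apply H'; lia).
  assert (pairsum f (b :: L') <= pairsum g (b :: L')).
  { apply IHch. intros; apply H'; lia. }
  lra.
Qed.

Lemma pairsum_plus f g L : pairsum (fun u v => f u v + g u v) L = pairsum f L + pairsum g L.
Proof.
  induction L as [|a L IH]; simpl; [ring|]. destruct L; [ring|]. rewrite IH; ring.
Qed.

Lemma pairsum_scal c f L : pairsum (fun u v => c * f u v) L = c * pairsum f L.
Proof.
  induction L as [|a L IH]; simpl; [ring|]. destruct L; [ring|]. rewrite IH; ring.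
Qed.

Lemma pairsum_ext f g L : (forall u v, f u v = g u v) -> pairsum f L = pairsum g L.
Proof.
  intros H; induction L as [|a L IH]; simpl; auto. destruct L; auto. rewrite IH, H; auto.
Qed.

Fixpoint ge_incr (a : nat) (M : list nat) : Prop :=
  match M with [] => True | x :: M' => (a <= x)%nat /\ ge_incr (S x) M' end.

Lemma ge_incr_mono a a' M : (a' <= a)%nat -> ge_incr a M -> ge_incr a' M.
Proof. destruct M; simpl; auto. intros ? [? ?]; split; auto; lia. Qed.

Lemma nil_in_sublists l : In [] (sublists l).
Proof. induction l; simpl; auto. apply in_or_app; right; auto. Qed.

Lemma sub_complete k : forall a M, ge_incr a M -> Forall (fun x => (x < a + k)%nat) M ->
  In M (sublists (seq a k)).
Proof.
  induction k as [|k IH]; intros a M H1 H2.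
  - destruct M as [|x M]; simpl; auto. simpl in H1. inversion H2; subst. lia.
  - destruct M as [|x M]; [apply nil_in_sublists|].
    simpl. apply in_or_app. destruct H1 as [H1 H1'].
    inversion H2; subst.
    destruct (Nat.eq_dec x a) as [->|Hne].
    + left. apply in_map. apply IH; auto.
      revert H4; apply Forall_impl; intros; lia.
    + right. apply IH. simpl. split; [lia|auto].
      constructor; [lia|]. revert H4; apply Forall_impl; intros; lia.
Qed.

Lemma sub_sound k : forall a M, In M (sublists (seq a k)) ->
  ge_incr a M /\ Forall (fun x => (x < a + k)%nat) M.
Proof.
  induction k as [|k IH]; intros a M H.
  - simpl in H. destruct H as [<-|[]]. simpl; auto.
  - simpl in H. apply in_app_or in H. destruct H as [H|H].
    + apply in_map_iff in H. destruct H as [M' [<- HM']].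
      destruct (IH _ _ HM') as [H1 H2]. simpl. split; [split; auto|].
      constructor; [lia|]. revert H2; apply Forall_impl; intros; lia.
    + destruct (IH _ _ H) as [H1 H2]. split; [eapply ge_incr_mono; [|exact H1]; lia|].
      revert H2; apply Forall_impl; intros; lia.
Qed.

Lemma ch_decomp lo L hi : ch lo L hi -> (lo < hi)%nat ->
  exists M, L = lo :: M ++ [hi] /\ ge_incr (S lo) M /\ Forall (fun x => (x < hi)%nat) M.
Proof.
  induction 1; intros Hlt; [lia|].
  destruct (Nat.eq_dec b c) as [->|Hne].
  - apply ch_self in H0. subst. exists []. simpl; auto.
  - assert (b < c)%nat by (pose proof (ch_le _ _ _ H0); lia).
    destruct (IHch H1) as [M [-> [H2 H3]]]. exists (b :: M). simpl. repeat split; auto; lia.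
Qed.

Lemma ch_build M : forall lo hi, ge_incr (S lo) M -> Forall (fun x => (x < hi)%nat) M ->
  (lo < hi)%nat -> ch lo (lo :: M ++ [hi]) hi.
Proof.
  induction M as [|x M IH]; intros lo hi H1 H2 H3.
  - simpl. econstructor; eauto. constructor.
  - simpl in *. destruct H1. inversion H2; subst. apply chS with x; [lia|]. apply IH; auto.
Qed.

Definition chains (i j : nat) : list (list nat) :=
  map (fun m => i :: m ++ [j]) (sublists (seq (S i) (j - i - 1))).

Lemma ch_in_chains i Q j : ch i Q j -> (i < j)%nat -> In Q (chains i j).
Proof.
  intros H Hlt. destruct (ch_decomp _ _ _ H Hlt) as [M [-> [H1 H2]]].
  unfold chains. apply (in_map (fun m => i :: m ++ [j])). apply sub_complete; auto.
  revert H2; apply Forall_impl; intros; lia.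
Qed.

Lemma chains_ch i Q j : In Q (chains i j) -> (i < j)%nat -> ch i Q j.
Proof.
  unfold chains. intros H Hlt. apply in_map_iff in H. destruct H as [M [<- HM]].
  apply sub_sound in HM. destruct HM as [H1 H2]. apply ch_build; auto.
  revert H2; apply Forall_impl; intros; lia.
Qed.

Lemma chains_nonnil i j : chains i j <> [].
Proof.
  unfold chains. intros H. apply map_eq_nil in H.
  pose proof (nil_in_sublists (seq (S i) (j - i - 1))). rewrite H in H0. inversion H0.
Qed.

Lemma partitions_chains n : (1 <= n)%nat -> partitions n = chains 0 n.
Proof.
  intros H. destruct n; [lia|]. unfold partitions, chains. replace (S n - 0 - 1)%nat with (S n - 1)%nat by lia. reflexivity.
Qed.

Lemma maxlist_ge0 l : 0 <= maxlist l.
Proof. induction l; simpl; [lra|]. unfold Rmax; destruct (Rle_dec a (maxlist l)); lra. Qed.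

Lemma maxlist_ge {A} (F : A -> R) L x : In x L -> F x <= maxlist (map F L).
Proof.
  induction L as [|y L IH]; simpl; [tauto|]. intros [->|H].
  - apply Rmax_l.
  - eapply Rle_trans; [apply IH; auto|apply Rmax_r].
Qed.

Lemma maxlist_le {A} (F : A -> R) L B : 0 <= B -> (forall x, In x L -> F x <= B) ->
  maxlist (map F L) <= B.
Proof.
  intros HB H. induction L as [|y L IH]; simpl; [lra|].
  apply Rmax_lub; [apply H; simpl; auto|apply IH; intros; apply H; simpl; auto].
Qed.

Lemma maxlist_att {A} (F : A -> R) L : L <> [] -> (forall x, 0 <= F x) ->
  exists x, In x L /\ maxlist (map F L) = F x.
Proof.
  intros HL HF. induction L as [|y L IH]; [congruence|].
  destruct L as [|z L].
  - exists y. simpl. split; auto. unfold Rmax; destruct (Rle_dec (F y) 0); auto.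
    specialize (HF y); lra.
  - destruct IH as [x [Hx Hm]]; [congruence|].
    change (maxlist (map F (y :: z :: L))) with (Rmax (F y) (maxlist (map F (z :: L)))).
    rewrite Hm. unfold Rmax; destruct (Rle_dec (F y) (F x)).
    + exists x; simpl in *; tauto.
    + exists y; simpl; auto.
Qed.

Lemma ch_le_sp f n R : ch 0 R n -> (1 <= n)%nat ->
  pairsum f R <= maxlist (map (pairsum f) (partitions n)).
Proof.
  intros H Hn. rewrite partitions_chains by auto. apply maxlist_ge. apply ch_in_chains; auto; lia.
Qed.

Fixpoint dp (lo : nat) (ps : list (nat * nat)) (hi : nat) : Prop :=
  match ps with
  | [] => (lo <= hi)%nat
  | pr :: ps' => (lo <= fst pr)%nat /\ (fst pr < snd pr)%nat /\ dp (snd pr) ps' hi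
  end.

Definition sumR (l : list R) : R := fold_right Rplus 0 l.

Lemma dp_weaken ps : forall lo lo' hi hi', (lo' <= lo)%nat -> (hi <= hi')%nat ->
  dp lo ps hi -> dp lo' ps hi'.
Proof.
  induction ps as [|pr ps IH]; simpl; intros; [lia|].
  destruct H1 as [? [? ?]]. repeat split; try lia. eapply IH; [| |eauto]; lia.
Qed.

Lemma dp_chain f ps : forall lo hi, (forall u v, 0 <= f u v) -> dp lo ps hi ->
  exists R, ch lo R hi /\ sumR (map (fun pr => f (fst pr) (snd pr)) ps) <= pairsum f R.
Proof.
  induction ps as [|[u v] ps IH]; intros lo hi Hf H; simpl in *.
  - destruct (Nat.eq_dec lo hi) as [->|Hne].
    + exists [hi]. split; [constructor|]. simpl; lra.
    + exists [lo; hi]. split; [apply chS with hi; [lia|constructor]|].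
      simpl. specialize (Hf lo hi); lra.
  - destruct H as [H1 [H2 H3]].
    destruct (IH _ _ Hf H3) as [R [HR HS]].
    destruct (ch_hd _ _ _ HR) as [R' ->].
    destruct (Nat.eq_dec lo u) as [->|Hne].
    + exists (u :: v :: R'). split; [apply chS with v; auto|].
      rewrite pairsum_cons. lra.
    + exists (lo :: u :: v :: R'). split; [apply chS with u; [lia|apply chS with v; auto]|].
      rewrite !pairsum_cons. specialize (Hf lo u). lra.
Qed.

Fixpoint op (l : list nat) : list (nat * nat) :=
  match l with
  | a :: ((b :: t) as l') => (a, b) :: op t
  | _ => []
  end.

Lemma pairsum_op g L : pairsum g L =
  sumR (map (fun pr => g (fst pr) (snd pr)) (op L)) + sumR (map (fun pr => g (fst pr) (snd pr)) (op (tl L))).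
Proof.
  induction L as [|a L IH]; [simpl; lra|].
  destruct L as [|b L]; [simpl; lra|].
  rewrite pairsum_cons, IH. change (op (a :: b :: L)) with ((a,b) :: op L).
  cbn [tl map sumR fold_right fst snd]. unfold sumR. ring.
Qed.

Definition sh (pr : nat * nat) : nat * nat := (pred (fst pr), snd pr).

Lemma op_dp c L j : ch c L j -> forall i, (i < c)%nat ->
  dp i (map sh (op L)) j /\ forall i', (i' <= c)%nat -> dp i' (map sh (op (tl L))) j.
Proof.
  induction 1; intros i Hi.
  - simpl. split; [lia|]. intros; lia.
  - destruct (ch_hd _ _ _ H0) as [L' ->]. split.
    + simpl. repeat split; try lia. destruct (IHch a H) as [_ H2]. apply (H2 b). lia.
    + intros i' Hi'. simpl tl. destruct (IHch i' ltac:(lia)) as [H1 _]. exact H1.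
Qed.

Fixpoint triples (l : list nat) : list (nat * nat * nat) :=
  match l with
  | a :: ((b :: c :: _) as l') => (a, b, c) :: triples l'
  | _ => []
  end.

Lemma triples_length l : length (triples l) = (length l - 2)%nat.
Proof.
  induction l as [|a l IH]; simpl; auto.
  destruct l as [|b [|c l]]; simpl; auto. simpl in IH. rewrite IH. lia.
Qed.

Lemma triples_x f L : (forall u v, 0 <= f u v) ->
  sumR (map (fun tr => f (fst (fst tr)) (snd (fst tr))) (triples L)) <= pairsum f L.
Proof.
  intros Hf. induction L as [|a L IH]; simpl; [lra|].
  destruct L as [|b [|c L]]; simpl.
  - lra.
  - specialize (Hf a b); lra.
  - simpl in IH. specialize (Hf a b). lra.
Qed.

Lemma triples_y g L :
  sumR (map (fun tr => g (snd (fst tr)) (snd tr)) (triples L)) = pairsum g (tl L).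
Proof.
  induction L as [|a L IH]; simpl; [lra|].
  destruct L as [|b [|c L]]; simpl; try lra.
  simpl in IH. rewrite IH. destruct L; simpl; ring.
Qed.

Lemma triples_in L u t v : In (u, t, v) (triples L) ->
  exists L1 L2, L = L1 ++ u :: t :: v :: L2.
Proof.
  induction L as [|a L IH]; simpl; [tauto|].
  destruct L as [|b [|c L]]; simpl; try tauto.
  intros [H|H].
  - inversion H; subst. exists [], L. auto.
  - destruct (IH H) as [L1 [L2 HE]]. exists (a :: L1), L2. rewrite HE. auto.
Qed.

Lemma ch_mid c L1 u t v L2 d : ch c (L1 ++ u :: t :: v :: L2) d ->
  (c <= u)%nat /\ (u < t)%nat /\ (t < v)%nat /\ ch c (L1 ++ u :: v :: L2) d.
Proof.
  revert c. induction L1 as [|x L1 IH]; intros c H; simpl in *.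
  - apply ch_inv in H. destruct H as [-> [[? _]|[b [Hb H]]]]; [discriminate|].
    apply ch_inv in H. destruct H as [-> [[? _]|[b' [Hb' H]]]]; [discriminate|].
    pose proof (ch_hd _ _ _ H) as [L' HL']. injection HL' as E1 E2. subst b'.
    repeat split; try lia. apply chS with v; [lia|auto].
  - apply ch_inv in H. destruct H as [-> [[H _]|[b [Hb H]]]].
    + destruct L1; discriminate.
    + destruct (IH _ H) as [H1 [H2 [H3 H4]]]. repeat split; try lia.
      apply chS with b; auto.
Qed.

Lemma pairsum_app f L1 u R : pairsum f (L1 ++ u :: R) = pairsum f (L1 ++ [u]) + pairsum f (u :: R).
Proof.
  induction L1 as [|x L1 IH]; simpl; [ring|].
  destruct L1 as [|y L1]; simpl; [ring|].
  simpl in IH. rewrite IH. ring.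
Qed.

Lemma sumR_ge0 {A} (F : A -> R) l : (forall x, 0 <= F x) -> 0 <= sumR (map F l).
Proof. intros H; induction l; simpl; [lra|]. specialize (H a); lra. Qed.

Lemma sumR_elem {A} (F : A -> R) l x : (forall x, 0 <= F x) -> In x l -> F x <= sumR (map F l).
Proof.
  intros H Hx. induction l as [|y l IH]; simpl in *; [tauto|].
  pose proof (sumR_ge0 F l H). destruct Hx as [->|Hx]; [specialize (H x); lra|].
  specialize (IH Hx). specialize (H y). lra.
Qed.

Lemma avg_exists {A} (F : A -> R) l : l <> [] ->
  exists e, In e l /\ INR (length l) * F e <= sumR (map F l).
Proof.
  induction l as [|e l IH]; intros Hl; [congruence|].
  destruct l as [|e' l].
  - exists e. simpl. split; auto. lra.
  - destruct IH as [x [Hx Hs]]; [congruence|].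
    set (l' := e' :: l) in *.
    pose proof (pos_INR (length l')).
    destruct (Rle_dec (F e) (F x)).
    + exists e. split; [simpl; auto|].
      change (length (e :: l')) with (S (length l')). rewrite S_INR.
      change (sumR (map F (e :: l'))) with (F e + sumR (map F l')). nra.
    + exists x. split; [simpl; auto|].
      change (length (e :: l')) with (S (length l')). rewrite S_INR.
      change (sumR (map F (e :: l'))) with (F e + sumR (map F l')). nra.
Qed.

Lemma pigeon {A} (x y : A -> R) l X Y : l <> [] ->
  (forall e, 0 <= x e) -> (forall e, 0 <= y e) ->
  sumR (map x l) <= X -> sumR (map y l) <= Y ->
  exists e, In e l /\ INR (length l) ^ 2 * (x e * y e) <= X * Y.
Proof.
  intros Hl Hx Hy HX HY.
  assert (0 <= X) by (pose proof (sumR_ge0 x l Hx); lra).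
  assert (0 <= Y) by (pose proof (sumR_ge0 y l Hy); lra).
  destruct (avg_exists (fun e => x e * Y + y e * X) l Hl) as [e [He Hs]].
  exists e. split; auto.
  assert (Hsum : sumR (map (fun e => x e * Y + y e * X) l) = sumR (map x l) * Y + sumR (map y l) * X).
  { clear. induction l; simpl; [ring|]. rewrite IHl. ring. }
  rewrite Hsum in Hs.
  assert (Hxe : x e <= X) by (pose proof (sumR_elem x l e Hx He); lra).
  assert (Hye : y e <= Y) by (pose proof (sumR_elem y l e Hy He); lra).
  specialize (Hx e); specialize (Hy e).
  pose proof (pos_INR (length l)) as HK.
  assert (HK1 : INR (length l) * (x e * Y + y e * X) <= 2 * X * Y) by nra.
  destruct (Req_dec X 0) as [HX0|HX0].
  { subst. assert (x e = 0) by lra. rewrite H1. nra. }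
  destruct (Req_dec Y 0) as [HY0|HY0].
  { subst. assert (y e = 0) by lra. rewrite H1. nra. }
  set (K := INR (length l)) in *.
  assert (H4 : 4 * (x e * Y) * (y e * X) <= (x e * Y + y e * X) ^ 2)
    by (pose proof (pow2_ge_0 (x e * Y - y e * X)); nra).
  assert (H5 : (K * (x e * Y + y e * X)) ^ 2 <= (2 * X * Y) ^ 2).
  { assert (0 <= K * (x e * Y + y e * X)).
    { apply Rmult_le_pos; [auto|]. apply Rplus_le_le_0_compat; apply Rmult_le_pos; auto. } apply pow_incr; split; auto. }
  assert (H6 : 4 * X * Y * (K ^ 2 * (x e * y e)) <= 4 * X * Y * (X * Y)).
  { replace (4 * X * Y * (K ^ 2 * (x e * y e))) with (K^2 * (4 * (x e * Y) * (y e * X))) by ring.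
    replace (4 * X * Y * (X * Y)) with ((2 * X * Y) ^ 2) by ring.
    eapply Rle_trans; [|exact H5]. replace ((K * (x e * Y + y e * X)) ^ 2) with (K^2 * (x e * Y + y e * X) ^ 2) by ring.
    apply Rmult_le_compat_l; [nra|auto]. }
  assert (0 < 4 * X * Y) by nra.
  apply Rmult_le_reg_l with (4 * X * Y); auto.
Qed.

Lemma key_ineq s K : 1 < s -> 0 < K ->
  (s - 1) * Rpower (K + 1) (- s) <= Rpower K (1 - s) - Rpower (K + 1) (1 - s).
Proof.
  intros Hs HK. set (K1 := K + 1). assert (HK1 : 0 < K1) by (unfold K1; lra).
  set (E := Rpower K1 (- s)).
  assert (HE : 0 < E) by apply Rpower_pos.
  assert (H1 : Rpower K1 (1 - s) = E * K1).
  { unfold E, Rpower. replace ((1 - s) * ln K1) with (- s * ln K1 + ln K1) by ring.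
    rewrite exp_plus, exp_ln; auto. }
  set (d := (1 - s) * (ln K - ln K1)).
  assert (H2 : Rpower K (1 - s) = E * K1 * exp d).
  { rewrite <- H1. unfold Rpower, d. rewrite <- exp_plus. f_equal. ring. }
  assert (H3 : ln K - ln K1 <= - / K1).
  { pose proof (exp_ineq1_le (ln K - ln K1)) as H.
    unfold Rminus in H at 2. rewrite exp_plus, exp_Ropp, !exp_ln in H by auto.
    assert (K * / K1 = 1 - / K1) by (unfold K1; field; lra). lra. }
  assert (H4 : (s - 1) * / K1 <= d).
  { unfold d. nra. }
  pose proof (exp_ineq1_le d).
  rewrite H1, H2.
  assert (E * K1 * ((s - 1) * / K1) = (s - 1) * E) by (field; lra).
  assert (0 < E * K1) by nra.
  nra.
Qed.

Fixpoint zc (s : R) (K : nat) : R :=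
  match K with O => 0 | S K' => zc s K' + Rpower (INR (S K')) (- s) end.

Lemma Rpower_1_l y : Rpower 1 y = 1.
Proof. unfold Rpower. rewrite ln_1, Rmult_0_r, exp_0. auto. Qed.

Lemma zc_bound_aux s K : 1 < s -> (1 <= K)%nat ->
  zc s K <= s / (s - 1) - Rpower (INR K) (1 - s) / (s - 1).
Proof.
  intros Hs HK. induction K as [|K IH]; [lia|].
  destruct K as [|K].
  - simpl zc. replace (INR 1) with 1 by (simpl; auto). rewrite !Rpower_1_l.
    apply Req_le. field. lra.
  - specialize (IH ltac:(lia)).
    change (zc s (S (S K))) with (zc s (S K) + Rpower (INR (S (S K))) (- s)).
    rewrite (S_INR (S K)).
    pose proof (key_ineq s (INR (S K)) Hs ltac:(apply lt_0_INR; lia)).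
    assert (Hd : / (s - 1) > 0) by (apply Rinv_0_lt_compat; lra).
    unfold Rdiv in *.
    assert (H' : Rpower (INR (S K) + 1) (-s) = ((s-1) * Rpower (INR (S K) + 1) (-s)) * / (s-1)) by (field; lra).
    pose proof (Rmult_le_compat_r (/(s-1)) _ _ (Rlt_le _ _ Hd) H). lra.
Qed.

Lemma zc_bound s K : 1 < s -> zc s K <= s / (s - 1).
Proof.
  intros Hs. destruct K as [|K].
  - simpl. apply Rlt_le. apply Rdiv_lt_0_compat; lra.
  - eapply Rle_trans; [apply zc_bound_aux; auto; lia|].
    assert (0 < Rpower (INR (S K)) (1 - s) / (s - 1)) by (apply Rdiv_lt_0_compat; [apply Rpower_pos|lra]).
    lra.
Qed.

Lemma zc_ge0 s K : 0 <= zc s K.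
Proof. induction K; simpl; [lra|]. pose proof (Rpower_pos (INR (S K)) (-s)). simpl in H. lra. Qed.

Lemma fold_plus_acc l acc : fold_right Rplus acc l = fold_right Rplus 0 l + acc.
Proof. induction l; simpl; [ring|]. rewrite IHl; ring. Qed.

Lemma blocksum_shape x i k : blocksum x i (i + k) = fold_right Rplus 0 (map x (seq (S i) k)).
Proof. unfold blocksum. f_equal. f_equal. f_equal. lia. Qed.

Lemma blocksum_split x u t v : (u <= t)%nat -> (t <= v)%nat ->
  blocksum x u v = blocksum x u t + blocksum x t v.
Proof.
  intros H1 H2.
  destruct (Nat.le_exists_sub u t H1) as [d1 [-> _]].
  destruct (Nat.le_exists_sub (d1 + u) v H2) as [d2 [-> _]].
  replace (d2 + (d1 + u))%nat with (u + (d1 + d2))%nat by lia.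
  replace (d1 + u)%nat with (u + d1)%nat by lia.
  rewrite blocksum_shape, blocksum_shape.
  replace (u + (d1 + d2))%nat with ((u + d1) + d2)%nat at 1 by lia.
  rewrite blocksum_shape.
  rewrite seq_app, map_app, fold_right_app, fold_plus_acc.
  replace (S u + d1)%nat with (S (u + d1)) by lia. ring.
Qed.

Lemma ch_seq i k : ch i (seq i (S k)) (i + k).
Proof.
  revert i. induction k as [|k IH]; intros i.
  - simpl. rewrite Nat.add_0_r. constructor.
  - change (seq i (S (S k))) with (i :: seq (S i) (S k)).
    apply chS with (S i); [lia|]. replace (i + S k)%nat with (S i + k)%nat by lia. apply IH.
Qed.

Lemma RS_full a b i k :
  pairsum (fun u v => blocksum a u v * b v) (seq i (S k)) = blocksum (fun l => a l * b l) i (i + k).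
Proof.
  revert i. induction k as [|k IH]; intros i.
  - simpl. rewrite Nat.add_0_r. unfold blocksum. rewrite Nat.sub_diag. simpl. auto.
  - change (seq i (S (S k))) with (i :: seq (S i) (S k)).
    change (seq (S i) (S k)) with (S i :: seq (S (S i)) k) at 1.
    rewrite pairsum_cons. change (S i :: seq (S (S i)) k) with (seq (S i) (S k)).
    rewrite IH. unfold blocksum.
    replace (S i - i)%nat with 1%nat by lia. replace (S i + k - S i)%nat with k by lia.
    replace (i + S k - i)%nat with (S k) by lia. simpl. ring.
Qed.

Lemma young1 (p : R) (a b : nat -> R) (i j : nat) (X Y : R)
  (hp : 1 <= p) (hp2 : p < 2) (Hij : (i < j)%nat)
  (HX : forall Q, ch i Q j -> pairsum (fun u v => rpow (Rabs (blocksum a u v)) p) Q <= X)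
  (HY : forall ps, dp i ps j ->
     sumR (map (fun pr => rpow (Rabs (b (snd pr) - b (S (fst pr)))) p) ps) <= Y) :
  forall K Q, ch i Q j -> length Q = (K + 2)%nat ->
  Rabs (pairsum (fun u v => blocksum a u v * b v) Q - blocksum a i j * b j)
    <= rpow (X * (2 * Y)) (/ p) * zc (2 / p) K.
Proof.
  assert (Hp0 : 0 < p) by lra.
  set (Z := rpow (X * (2 * Y)) (/ p)).
  assert (HZ : 0 <= Z) by apply rpow_ge0.
  induction K as [|K IH]; intros Q HQ HL.
  - destruct Q as [|x [|y [|z Q]]]; simpl in HL; try lia.
    apply ch_inv in HQ. destruct HQ as [-> [[? _]|[c [Hc HQ]]]]; [discriminate|].
    apply ch_inv in HQ. destruct HQ as [-> [[_ ->]|[c' [_ HQ]]]].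
    + simpl. replace (blocksum a i j * b j + 0 - blocksum a i j * b j) with 0 by ring.
      rewrite Rabs_R0. lra.
    + destruct (ch_hd _ _ _ HQ) as [? ?]; discriminate.
  - set (fa := fun u v => rpow (Rabs (blocksum a u v)) p).
    set (x := fun tr : nat * nat * nat => fa (fst (fst tr)) (snd (fst tr))).
    set (g := fun t v => rpow (Rabs (b v - b (S (pred t)))) p).
    set (y := fun tr : nat * nat * nat => g (snd (fst tr)) (snd tr)).
    assert (HxS : sumR (map x (triples Q)) <= X).
    { eapply Rle_trans; [apply triples_x|apply HX; auto]. intros; apply rpow_ge0. }
    assert (HyS : sumR (map y (triples Q)) <= 2 * Y).
    { unfold y. rewrite triples_y, pairsum_op.
      destruct Q as [|q Q1]; [inversion HQ|].
      apply ch_inv in HQ. destruct HQ as [-> [[_ Hij0]|[c [Hc HQ1]]]]; [lia|].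
      simpl tl. destruct (op_dp _ _ _ HQ1 i Hc) as [D1 D2].
      specialize (D2 i ltac:(lia)).
      pose proof (HY _ D1) as Y1. pose proof (HY _ D2) as Y2.
      rewrite map_map in Y1, Y2.
      assert (E : forall l, sumR (map (fun pr => g (fst pr) (snd pr)) l) =
        sumR (map (fun x => rpow (Rabs (b (snd (sh x)) - b (S (fst (sh x))))) p) l)).
      { intros l. reflexivity. }
      rewrite (E (op Q1)), (E (op (tl Q1))). lra. }
    assert (HX0 : 0 <= X) by (pose proof (sumR_ge0 x (triples Q) ltac:(intros; apply rpow_ge0)); lra).
    assert (HY0 : 0 <= Y) by (pose proof (sumR_ge0 y (triples Q) ltac:(intros; apply rpow_ge0)); lra).
    assert (HT : triples Q <> []).
    { intros HT. pose proof (triples_length Q). rewrite HT in H. simpl in H. lia. }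
    assert (HTl : length (triples Q) = S K) by (rewrite triples_length; lia).
    destruct (pigeon x y (triples Q) X (2 * Y) HT ltac:(intros; apply rpow_ge0)
                ltac:(intros; apply rpow_ge0) HxS HyS) as [[[u t] v] [Hin Hpig]].
    rewrite HTl in Hpig.
    destruct (triples_in _ _ _ _ Hin) as [L1 [L2 ->]].
    destruct (ch_mid _ _ _ _ _ _ _ HQ) as [Hu [Hut [Htv HQ']]].
    assert (HL' : length (L1 ++ u :: v :: L2) = (K + 2)%nat).
    { rewrite length_app in HL |- *. simpl in HL |- *. lia. }
    specialize (IH _ HQ' HL').
    set (F := fun u v => blocksum a u v * b v).
    assert (Hdiff : pairsum F (L1 ++ u :: t :: v :: L2) - pairsum F (L1 ++ u :: v :: L2)
                    = blocksum a u t * (b t - b v)).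
    { rewrite (pairsum_app F L1 u (t :: v :: L2)), (pairsum_app F L1 u (v :: L2)).
      rewrite !pairsum_cons. unfold F.
      rewrite (blocksum_split a u t v) by lia. ring. }
    set (w := Rabs (blocksum a u t * (b t - b v))).
    set (T := Rpower (INR (S K)) (- (2 / p))).
    assert (HK : 0 < INR (S K)) by (apply lt_0_INR; lia).
    assert (Hw : w <= Z * T).
    { apply (rpow_le_inv _ _ p); auto.
      - apply Rabs_pos.
      - apply Rmult_le_pos; auto. left; apply Rpower_pos.
      - unfold w. rewrite Rabs_mult, rpow_mult by apply Rabs_pos.
        rewrite (rpow_mult Z T p) by (auto; left; apply Rpower_pos).
        unfold Z. rewrite rpow_inv'; auto.
        2:{ apply Rmult_le_pos; [|apply Rmult_le_pos]; lra. }
        rewrite (rpow_pos_eq T p) by apply Rpower_pos. unfold T. rewrite Rpower_mult.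
        replace (- (2 / p) * p) with (- INR 2) by (simpl; field; lra).
        rewrite Rpower_Ropp, Rpower_pow by auto.
        unfold x, y, fa, g in Hpig. simpl in Hpig.
        replace (S (pred t)) with t in Hpig by lia.
        rewrite Rabs_minus_sym in Hpig.
        set (P := rpow (Rabs (blocksum a u t)) p * rpow (Rabs (b t - b v)) p) in *.
        assert (HK2 : 0 < INR (S K) ^ 2) by (apply pow_lt; auto).
        apply Rmult_le_reg_l with (INR (S K) ^ 2); auto.
        replace (INR (S K) ^ 2 * (X * (2 * Y) * / INR (S K) ^ 2)) with (X * (2 * Y)) by (field; lra).
        exact Hpig. }
    change (zc (2 / p) (S K)) with (zc (2 / p) K + T).
    set (A := pairsum F (L1 ++ u :: t :: v :: L2)) in *.
    set (A' := pairsum F (L1 ++ u :: v :: L2)) in *.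
    replace (A - blocksum a i j * b j) with ((A' - blocksum a i j * b j) + (A - A')) by ring.
    eapply Rle_trans; [apply Rabs_triang|]. rewrite Hdiff. fold w.
    rewrite Rmult_plus_distr_l. apply Rplus_le_compat; auto.
Qed.

Lemma sup_ch (fa : nat -> nat -> R) (Hfa : forall u v, 0 <= fa u v) lo P n : ch lo P n ->
  exists R, ch lo R n /\
    pairsum (fun i j => maxlist (map (pairsum fa) (chains i j))) P <= pairsum fa R.
Proof.
  induction 1.
  - exists [a]. split; [constructor|]. simpl; lra.
  - destruct IHch as [R' [HR' HS]].
    destruct (ch_hd _ _ _ H0) as [L' ->].
    destruct (maxlist_att (pairsum fa) (chains a b) (chains_nonnil a b)
               (fun Q => pairsum_ge0 fa Q Hfa)) as [R0 [HR0 HM]].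
    apply chains_ch in HR0; auto.
    destruct (ch_app _ _ _ _ _ HR0 HR') as [Hc Hs].
    exists (R0 ++ tl R'). split; auto. rewrite Hs, pairsum_cons, HM. lra.
Qed.

Definition Cs (p : R) : R := (2 / p) / (2 / p - 1).

Lemma Cs_pos p : 1 <= p -> p < 2 -> 0 < Cs p.
Proof.
  intros. unfold Cs. assert (1 < 2 / p).
  { apply Rmult_lt_reg_r with p; [lra|]. unfold Rdiv. rewrite Rmult_assoc, Rinv_l by lra. lra. }
  apply Rdiv_lt_0_compat; lra.
Qed.

Lemma block_bound p a b n u v (hp : 1 <= p) (hp2 : p < 2) (Huv : (u < v)%nat) (Hv : (v <= n)%nat) :
  rpow (Rabs (blocksum (fun i => a i * b i) u v)) p <=
  rpow 2 p * (rpow (Rabs (blocksum a u v)) p * rpow (supnorm n b) p +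
    rpow (Cs p) p * (maxlist (map (pairsum (fun u v => rpow (Rabs (blocksum a u v)) p)) (chains u v))
                     * (2 * vp_pow p n b))).
Proof.
  assert (Hp0 : 0 < p) by lra.
  assert (Hs : 1 < 2 / p).
  { apply Rmult_lt_reg_r with p; [lra|]. unfold Rdiv. rewrite Rmult_assoc, Rinv_l by lra. lra. }
  set (fa := fun u v => rpow (Rabs (blocksum a u v)) p).
  set (Xuv := maxlist (map (pairsum fa) (chains u v))).
  set (Y := vp_pow p n b). set (B := supnorm n b).
  assert (HX : forall Q, ch u Q v -> pairsum fa Q <= Xuv).
  { intros Q HQ. apply maxlist_ge. apply ch_in_chains; auto. }
  assert (HY : forall ps, dp u ps v ->
     sumR (map (fun pr => rpow (Rabs (b (snd pr) - b (S (fst pr)))) p) ps) <= Y).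
  { intros ps Hps. apply (dp_weaken ps u 0 v n) in Hps; try lia.
    destruct (dp_chain (fun u v => rpow (Rabs (b v - b (S u))) p) ps 0 n
               ltac:(intros; apply rpow_ge0) Hps) as [R [HR HS]].
    eapply Rle_trans; [exact HS|]. unfold Y, vp_pow. apply ch_le_sp; auto. lia. }
  pose proof (young1 p a b u v Xuv Y hp hp2 Huv HX HY (v - u - 1) (seq u (S (v - u)))) as HYg.
  replace (u + (v - u))%nat with v in * by lia.
  rewrite RS_full in HYg. replace (u + (v - u))%nat with v in HYg by lia.
  specialize (HYg ltac:(pose proof (ch_seq u (v - u)) as Hc; replace (u + (v - u))%nat with v in Hc by lia; exact Hc)
                  ltac:(rewrite length_seq; lia)).
  set (Z := rpow (Xuv * (2 * Y)) (/ p)) in *.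
  assert (HZ : 0 <= Z) by apply rpow_ge0.
  assert (Hzc : zc (2 / p) (v - u - 1) <= Cs p) by (apply zc_bound; auto).
  assert (HbB : Rabs (b v) <= B).
  { unfold B, supnorm. apply (maxlist_ge (fun i => Rabs (b i))). apply in_seq. lia. }
  assert (HXuv : 0 <= Xuv) by apply maxlist_ge0.
  assert (HY0 : 0 <= Y) by apply maxlist_ge0.
  assert (HB0 : 0 <= B) by apply maxlist_ge0.
  pose proof (Cs_pos p hp hp2) as HCs.
  set (S1 := blocksum (fun i => a i * b i) u v) in *.
  set (A1 := blocksum a u v) in *.
  assert (H1 : Rabs S1 <= Rabs A1 * B + Cs p * Z).
  { replace S1 with (A1 * b v + (S1 - A1 * b v)) by ring.
    eapply Rle_trans; [apply Rabs_triang|]. rewrite Rabs_mult.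
    apply Rplus_le_compat; [apply Rmult_le_compat_l; auto; apply Rabs_pos|].
    eapply Rle_trans; [exact HYg|]. rewrite Rmult_comm. apply Rmult_le_compat_r; auto. }
  eapply Rle_trans; [apply (rpow_le (Rabs S1) (Rabs A1 * B + Cs p * Z) p); [lra|split; [apply Rabs_pos|exact H1]]|].
  eapply Rle_trans; [apply rpow_sum2; auto|].
  - apply Rmult_le_pos; auto; apply Rabs_pos.
  - apply Rmult_le_pos; lra.
  - rewrite rpow_mult by (auto; apply Rabs_pos).
    rewrite (rpow_mult (Cs p) Z p) by lra.
    unfold Z. rewrite rpow_inv' by (auto; apply Rmult_le_pos; lra).
    apply Req_le. reflexivity.
Qed.

Theorem corollary2p4 (p : R) (hp1 : 1 <= p) (hp2 : p < 2) :
  exists C : R, 0 < C /\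
    forall (n : nat) (a b : nat -> R),
      s_p p n (fun i => a i * b i) <= C * s_p p n a * (supnorm n b + v_p p n b).
Proof.
  assert (Hp0 : 0 < p) by lra.
  pose proof (Cs_pos p hp1 hp2) as HCs.
  set (c := rpow (Cs p) p).
  assert (Hc : 0 <= c) by apply rpow_ge0.
  exists (2 * (1 + 2 * c)). split; [lra|].
  intros n a b.
  set (X := sp_pow p n a). set (Y := vp_pow p n b). set (B := supnorm n b).
  assert (HX0 : 0 <= X) by apply maxlist_ge0.
  assert (HY0 : 0 <= Y) by apply maxlist_ge0.
  assert (HB0 : 0 <= B) by apply maxlist_ge0.
  unfold s_p, v_p. fold X Y.
  set (sa := rpow X (/ p)). set (V := rpow Y (/ p)).
  assert (Hsa : 0 <= sa) by apply rpow_ge0.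
  assert (HV : 0 <= V) by apply rpow_ge0.
  set (C := 2 * (1 + 2 * c)).
  assert (HC : 0 <= C) by (unfold C; lra).
  assert (Hkey : sp_pow p n (fun i => a i * b i) <= rpow (C * sa * (B + V)) p).
  { unfold sp_pow at 1. apply maxlist_le; [apply rpow_ge0|].
    intros P HP.
    destruct n as [|n']; [simpl in HP; contradiction|].
    set (n := S n') in *.
    assert (Hn : (1 <= n)%nat) by (unfold n; lia).
    rewrite partitions_chains in HP by auto.
    apply chains_ch in HP; [|lia].
    set (fa := fun u v => rpow (Rabs (blocksum a u v)) p).
    set (Xf := fun u v => maxlist (map (pairsum fa) (chains u v))).
    eapply Rle_trans.
    { apply (pairsum_le_ch _ (fun u v => rpow 2 p * (fa u v * rpow B p + c * (Xf u v * (2 * Y)))) 0 P n HP).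
      intros u v _ Huv Hv. apply block_bound; auto. }
    assert (HE : pairsum (fun u v => rpow 2 p * (fa u v * rpow B p + c * (Xf u v * (2 * Y)))) P
       = (rpow 2 p * rpow B p) * pairsum fa P + (rpow 2 p * c * (2 * Y)) * pairsum Xf P).
    { rewrite <- !pairsum_scal, <- pairsum_plus. apply pairsum_ext. intros; ring. }
    rewrite HE.
    assert (Hfa : pairsum fa P <= X) by (apply ch_le_sp; auto).
    destruct (sup_ch fa ltac:(intros; apply rpow_ge0) 0 P n HP) as [R [HR HRs]].
    assert (HXf : pairsum Xf P <= X).
    { eapply Rle_trans; [exact HRs|]. apply ch_le_sp; auto. }
    rewrite rpow_mult by (try apply Rmult_le_pos; lra).
    rewrite rpow_mult by lra.
    assert (HsaX : rpow sa p = X) by (unfold sa; apply rpow_inv'; auto).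
    assert (HVY : rpow V p = Y) by (unfold V; apply rpow_inv'; auto).
    rewrite HsaX.
    assert (H2p : 0 <= rpow 2 p) by apply rpow_ge0.
    assert (HBp : 0 <= rpow B p) by apply rpow_ge0.
    assert (HCp : rpow C p = rpow 2 p * rpow (1 + 2 * c) p).
    { unfold C. apply rpow_mult; lra. }
    assert (Hcp : 1 + 2 * c <= rpow (1 + 2 * c) p) by (apply rpow_ge_self; lra).
    assert (HBV1 : rpow B p <= rpow (B + V) p) by (apply rpow_le; lra).
    assert (HBV2 : Y <= rpow (B + V) p) by (rewrite <- HVY; apply rpow_le; lra).
    set (W := rpow (B + V) p) in *.
    assert (HW : 0 <= W) by apply rpow_ge0.
    assert (Hpf : 0 <= pairsum fa P) by (apply pairsum_ge0; intros; apply rpow_ge0).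
    assert (Hpx : 0 <= pairsum Xf P) by (apply pairsum_ge0; intros; apply maxlist_ge0).
    rewrite HCp.
    assert (S1 : rpow 2 p * rpow B p * pairsum fa P <= rpow 2 p * rpow B p * X).
    { apply Rmult_le_compat_l; [apply Rmult_le_pos|]; auto. }
    assert (S2 : rpow 2 p * c * (2 * Y) * pairsum Xf P <= rpow 2 p * c * (2 * Y) * X).
    { apply Rmult_le_compat_l; [repeat apply Rmult_le_pos|]; lra. }
    assert (S3 : rpow B p + c * (2 * Y) <= (1 + 2 * c) * W) by nra.
    assert (S4 : (1 + 2 * c) * W <= rpow (1 + 2 * c) p * W) by (apply Rmult_le_compat_r; auto).
    assert (S5 : rpow 2 p * X * (rpow B p + c * (2 * Y)) <= rpow 2 p * X * (rpow (1 + 2 * c) p * W)).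
    { apply Rmult_le_compat_l; [apply Rmult_le_pos; auto|lra]. }
    nra. }
  assert (Hab0 : 0 <= sp_pow p n (fun i => a i * b i)) by apply maxlist_ge0.
  eapply Rle_trans; [apply (rpow_le _ (rpow (C * sa * (B + V)) p) (/ p)); [apply Rinv_0_lt_compat; lra|split; [auto|exact Hkey]]|].
  rewrite rpow_inv by (auto; repeat apply Rmult_le_pos; lra).
  lra.
Qed.
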